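(* Let $A,B,C\in\mathrm{Sym}(\mathbb C^{2d})$. If $A\#B$, $B\#C$, $(A\#B)\#C$ and $A\#(B\#C)$ are all well defined, then $(A\#B)\#C=A\#(B\#C)$. Moreover, for all $A,B\in\mathrm{Sym}(\mathbb C^{2d})$ (whenever the products are well defined): $A\#0=0\#A=A$, $A\#(-A)=0$, $\overline{A\#B}=\bar B\#\bar A$, and $(-A)\#(-B)=-(B\#A)$.
   Context: Let $d\ge 1$, let $\mathbb 1$ denote an identity matrix, and let $\theta=\begin{bmatrix}0&-i\mathbb 1_d\\ i\mathbb 1_d&0\end{bmatrix}$ ($2d\times 2d$). $\mathrm{Sym}(\mathbb C^{n})$ denotes the set of complex symmetric $n\times n$ matrices; $\bar A$ is the entrywise complex conjugate. For $A,B\in\mathrm{Sym}(\mathbb C^{2d})$ such that $M=\begin{bmatrix}\theta A\theta&-\theta\\ \theta&\theta B\theta\end{bmatrix}$ is invertible, one defines $A\#B:=J^TM^{-1}J\in\mathrm{Sym}(\mathbb C^{2d})$, where $J=\begin{bmatrix}-\mathbb 1_{2d}\\ \mathbb 1_{2d}\end{bmatrix}$; $A\#B$ is called well defined when $M$ is invertible. *)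

(* Defs.v *)
(* Complex numbers: an arbitrary numClosedFieldType C
   (e.g. algC), with imaginary unit 'i and complex conjugation Num.conj. *)
From HB Require Import structures.
From mathcomp Require Import all_boot all_order all_algebra.
Set Implicit Arguments. Unset Strict Implicit. Unset Printing Implicit Defensive.
Import Order.TTheory GRing.Theory Num.Theory.
Local Open Scope ring_scope.

Section Sharp.
Variable C : numClosedFieldType.
Variable d : nat.

Definition symmx (A : 'M[C]_(d + d)) : bool := A^T == A.

Definition theta : 'M[C]_(d + d) :=
  block_mx 0 (- ('i%:M)) ('i%:M) 0.

Definition sharpM (A B : 'M[C]_(d + d)) : 'M[C]_((d + d) + (d + d)) :=
  block_mx (theta *m A *m theta) (- theta) theta (theta *m B *m theta).

Definition sharpJ : 'M[C]_((d + d) + (d + d), d + d) :=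
  col_mx (- 1%:M) 1%:M.

Definition sharp_wd (A B : 'M[C]_(d + d)) : bool := sharpM A B \in unitmx.

Definition sharp (A B : 'M[C]_(d + d)) : 'M[C]_(d + d) :=
  sharpJ^T *m invmx (sharpM A B) *m sharpJ.

Definition entconjmx (A : 'M[C]_(d + d)) : 'M[C]_(d + d) := map_mx Num.conj A.

End Sharp.

Arguments symmx {C d} A.
Arguments theta {C d}.
Arguments sharpM {C d} A B.
Arguments sharpJ {C d}.
Arguments sharp_wd {C d} A B.
Arguments sharp {C d} A B.
Arguments entconjmx {C d} A.

(* Main.v *)
Require Import Defs.
From HB Require Import structures.
From mathcomp Require Import all_boot all_order all_algebra ring.
Import Order.TTheory GRing.Theory Num.Theory.
Local Open Scope ring_scope.
Set Implicit Arguments. Unset Strict Implicit.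

Lemma thth (C : numClosedFieldType) d : (theta *m theta : 'M[C]_(d+d)) = 1%:M.
Proof.
rewrite /theta mulmx_block !mulmx0 !mul0mx !addr0 !add0r mulNmx mulmxN -!scalar_mxM.
by rewrite -expr2 sqrCi -(raddfN (@scalar_mx _ _)) opprK -scalar_mx_block.
Qed.

Lemma conj_theta (C : numClosedFieldType) d : entconjmx (theta : 'M[C]_(d+d)) = - theta.
Proof.
rewrite /entconjmx /theta map_block_mx !map_mx0 map_mxN !map_scalar_mx /= conjCi.
by rewrite opp_block_mx !oppr0 !(raddfN (@scalar_mx _ _)) opprK.
Qed.

Lemma conjM (C : numClosedFieldType) d (X Y : 'M[C]_(d+d)) : entconjmx (X *m Y) = entconjmx X *m entconjmx Y.
Proof. by rewrite /entconjmx map_mxM. Qed.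

Ltac mxring := repeat match goal with |- context [@theta ?C ?d] => let t := fresh "t" in generalize (@theta C d); intros t end; apply/matrixP => i j; rewrite !mxE; ring.
Lemma test (C : numClosedFieldType) d (A x y z : 'M[C]_(d+d)) : A *m (theta *m x) - (y + z) = - y + A *m (theta *m x) - z.
Proof. mxring. Qed.

Definition Sol (C : numClosedFieldType) d (A B z x y : 'M[C]_(d+d)) :=
  A *m (theta *m x) - y = - z /\ x + B *m (theta *m y) = z.

Lemma th_inj (C : numClosedFieldType) d (X Y : 'M[C]_(d+d)) :
  theta *m X = theta *m Y -> X = Y.
Proof. by move=> h; rewrite -(mul1mx X) -(mul1mx Y) -thth -!mulmxA h. Qed.

Lemma Meq (C : numClosedFieldType) d (A B z x y : 'M[C]_(d+d)) :
  Sol A B z x y <-> sharpM A B *m col_mx x y = col_mx (- (theta *m z)) (theta *m z).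
Proof.
rewrite /sharpM mul_block_col.
have e1 : theta *m A *m theta *m x + - theta *m y = theta *m (A *m (theta *m x) - y).
  by rewrite mulmxBr mulNmx !mulmxA.
have e2 : theta *m x + theta *m B *m theta *m y = theta *m (x + B *m (theta *m y)).
  by rewrite mulmxDr !mulmxA.
rewrite e1 e2 -mulmxN; split.
  by case=> -> ->.
by case/eq_col_mx => /th_inj h1 /th_inj h2.
Qed.

Lemma charac (C : numClosedFieldType) d (A B z x y : 'M[C]_(d+d)) :
  sharp_wd A B -> Sol A B z x y -> sharp A B *m (theta *m z) = y - x.
Proof.
move=> wd /Meq h.
have hJ : sharpJ *m (theta *m z) = col_mx (- (theta *m z)) (theta *m z).
  by rewrite /sharpJ mul_col_mx mulNmx !mul1mx.
have hc : col_mx x y = invmx (sharpM A B) *m (sharpJ *m (theta *m z)).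
  by rewrite hJ -h mulKmx.
rewrite /sharp -!mulmxA -hc /sharpJ tr_col_mx mul_row_col trmx1 mul1mx.
have -> : (- (1%:M : 'M[C]_(d+d)))^T = - 1%:M by apply/matrixP=> i j; rewrite !mxE eq_sym.
by rewrite mulNmx mul1mx addrC.
Qed.

Lemma exist (C : numClosedFieldType) d (A B z : 'M[C]_(d+d)) :
  sharp_wd A B -> exists x y, Sol A B z x y.
Proof.
move=> wd.
pose X := invmx (sharpM A B) *m col_mx (- (theta *m z)) (theta *m z).
exists (usubmx X), (dsubmx X); apply/Meq.
by rewrite vsubmxK /X mulKVmx.
Qed.

Lemma inj (C : numClosedFieldType) d (A B x y : 'M[C]_(d+d)) :
  sharp_wd A B -> Sol A B 0 x y -> x = 0 /\ y = 0.
Proof.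
move=> wd /Meq h.
have : col_mx x y = 0.
  by rewrite -(mulKmx wd (col_mx x y)) h !mulmx0 oppr0 col_mx0 mulmx0.
by rewrite -col_mx0 => /eq_col_mx.
Qed.

Lemma sub0 (V : zmodType) (x y : V) : x = y -> x - y = 0.
Proof. by move=> ->; rewrite subrr. Qed.

Lemma thsharp (C : numClosedFieldType) d (X : 'M[C]_(d+d)) : X *m (theta *m theta) = X.
Proof. by rewrite thth mulmx1. Qed.

Ltac mxlin := rewrite ?(mulmxDr, mulmxBr, mulmxN, mulNmx, mulmxDl, mulmxBl, mul0mx, mulmx0); mxring.

Lemma part_assoc (C : numClosedFieldType) d (A B D : 'M[C]_(d + d)) :
  sharp_wd A B -> sharp_wd B D ->
  sharp_wd (sharp A B) D -> sharp_wd A (sharp B D) ->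
  sharp (sharp A B) D = sharp A (sharp B D).
Proof.
move=> wAB wBD wL wR.
have [a [e [h1 h2]]] := exist theta wR.
have [b [c [h3 h4]]] := exist e wBD.
have hT := charac wBD (conj h3 h4).
have hR := charac wR (conj h1 h2).
rewrite hT in h2.
have g1 : Sol A B (a + B *m (theta *m b)) a b.
  split=> //.
  apply/eqP; rewrite -subr_eq0; apply/eqP.
  transitivity ((A *m (theta *m a) - e - - theta) + (B *m (theta *m b) - c - - e)
                + (a + (c - b) - theta)); first by mxlin.
  by rewrite (sub0 h1) (sub0 h3) (sub0 h2) !addr0.
have hAB := charac wAB g1.
have g2 : Sol (sharp A B) D theta (a + B *m (theta *m b)) c.
  split.
    rewrite hAB; apply/eqP; rewrite -subr_eq0; apply/eqP.
    transitivity (- (a + (c - b) - theta)); first by mxlin.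
    by rewrite (sub0 h2) oppr0.
  apply/eqP; rewrite -subr_eq0; apply/eqP.
  transitivity ((a + (c - b) - theta) + (B *m (theta *m b) - c - - e)
                + (b + D *m (theta *m c) - e)); first by mxlin.
  by rewrite (sub0 h2) (sub0 h3) (sub0 h4) !addr0.
have hL := charac wL g2.
rewrite -(thsharp (sharp (sharp A B) D)) -(thsharp (sharp A (sharp B D))) hL hR.
apply/eqP; rewrite -subr_eq0; apply/eqP.
transitivity (- (B *m (theta *m b) - c - - e)); first by mxlin.
by rewrite (sub0 h3) oppr0.
Qed.

Lemma part_r0 (C : numClosedFieldType) d (A : 'M[C]_(d + d)) :
  sharp_wd A 0 -> sharp A 0 = A.
Proof.
move=> w.
have g : Sol A 0 theta theta (A *m (theta *m theta) + theta).
  by split; [mxlin | rewrite mul0mx addr0].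
have := charac w g.
rewrite thsharp => ->; by rewrite thsharp addrK.
Qed.

Lemma part_l0 (C : numClosedFieldType) d (A : 'M[C]_(d + d)) :
  sharp_wd 0 A -> sharp 0 A = A.
Proof.
move=> w.
have g : Sol 0 A theta (theta - A *m (theta *m theta)) theta.
  by split; mxlin.
have := charac w g.
rewrite thsharp => ->; by rewrite thsharp opprB addrC subrK.
Qed.

Lemma part_inv (C : numClosedFieldType) d (A : 'M[C]_(d + d)) :
  sharp_wd A (- A) -> sharp A (- A) = 0.
Proof.
move=> w.
have [x [y [h1 h2]]] := exist theta w.
have hc := charac w (conj h1 h2).
have g : Sol A (- A) 0 (x - y) (- (x - y)).
  split.
    apply/eqP; rewrite -subr_eq0; apply/eqP.
    transitivity ((A *m (theta *m x) - y - - theta) + (x + - A *m (theta *m y) - theta));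
      first by mxlin.
    by rewrite (sub0 h1) (sub0 h2) !addr0.
  apply/eqP; rewrite -subr_eq0; apply/eqP.
  transitivity ((A *m (theta *m x) - y - - theta) + (x + - A *m (theta *m y) - theta));
    first by mxlin.
  by rewrite (sub0 h1) (sub0 h2) !addr0.
have [hw _] := inj w g.
rewrite -(thsharp (sharp A (- A))) hc.
by apply/eqP; rewrite -oppr_eq0 opprB hw.
Qed.

Lemma conjD (C : numClosedFieldType) d (X Y : 'M[C]_(d+d)) : entconjmx (X + Y) = entconjmx X + entconjmx Y.
Proof. by rewrite /entconjmx map_mxD. Qed.
Lemma conjN (C : numClosedFieldType) d (X : 'M[C]_(d+d)) : entconjmx (- X) = - entconjmx X.
Proof. by rewrite /entconjmx map_mxN. Qed.

Lemma part_conj (C : numClosedFieldType) d (A B : 'M[C]_(d + d)) :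
  sharp_wd A B -> sharp_wd (entconjmx B) (entconjmx A) ->
  entconjmx (sharp A B) = sharp (entconjmx B) (entconjmx A).
Proof.
move=> w wc.
have [x [y [h1 h2]]] := exist (- theta) w.
have hc := charac w (conj h1 h2).
have k1 := congr1 entconjmx h1; have k2 := congr1 entconjmx h2.
have kc := congr1 entconjmx hc.
rewrite !(conjD, conjN, conjM, conj_theta, opprK) in k1 k2 kc.
have g : Sol (entconjmx B) (entconjmx A) theta (entconjmx y) (entconjmx x).
  split.
    apply/eqP; rewrite -subr_eq0; apply/eqP.
    transitivity (- (entconjmx x + entconjmx B *m (- theta *m entconjmx y) - theta));
      first by mxlin.
    by rewrite (sub0 k2) oppr0.
  apply/eqP; rewrite -subr_eq0; apply/eqP.
  transitivity (- (entconjmx A *m (- theta *m entconjmx x) - entconjmx y - - theta));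
    first by mxlin.
  by rewrite (sub0 k1) oppr0.
have hc2 := charac wc g.
rewrite -(thsharp (sharp (entconjmx B) _)) hc2.
rewrite mulNmx mulmxN thsharp in kc.
by apply: oppr_inj; rewrite opprB -kc.
Qed.

Lemma part_neg (C : numClosedFieldType) d (A B : 'M[C]_(d + d)) :
  sharp_wd (- A) (- B) -> sharp_wd B A -> sharp (- A) (- B) = - sharp B A.
Proof.
move=> w wBA.
have [x [y [h1 h2]]] := exist theta w.
have hc := charac w (conj h1 h2).
have g : Sol B A (- theta) (- y) (- x).
  split.
    apply/eqP; rewrite -subr_eq0; apply/eqP.
    transitivity (x + - B *m (theta *m y) - theta); first by mxlin.
    by rewrite (sub0 h2).
  apply/eqP; rewrite -subr_eq0; apply/eqP.
  transitivity (- A *m (theta *m x) - y - - theta); first by mxlin.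
  by rewrite (sub0 h1).
have hc2 := charac wBA g.
rewrite mulmxN mulmxN in hc2.
rewrite -(thsharp (sharp (- A) _)) hc -(thsharp (sharp B A)).
by rewrite hc2 opprK addrC.
Qed.

Theorem mainTheorem2 (C : numClosedFieldType) (d : nat) (hd : (0 < d)%N) :
  (forall A B D : 'M[C]_(d + d),
     symmx A -> symmx B -> symmx D ->
     sharp_wd A B -> sharp_wd B D ->
     sharp_wd (sharp A B) D -> sharp_wd A (sharp B D) ->
     sharp (sharp A B) D = sharp A (sharp B D)) /\
  (forall A B : 'M[C]_(d + d), symmx A -> symmx B ->
     (sharp_wd A 0 -> sharp A 0 = A) /\
     (sharp_wd 0 A -> sharp 0 A = A) /\
     (sharp_wd A (- A) -> sharp A (- A) = 0) /\
     (sharp_wd A B -> sharp_wd (entconjmx B) (entconjmx A) ->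
        entconjmx (sharp A B) = sharp (entconjmx B) (entconjmx A)) /\
     (sharp_wd (- A) (- B) -> sharp_wd B A ->
        sharp (- A) (- B) = - sharp B A)).
Proof.
split.
  by move=> A B D _ _ _; apply: part_assoc.
move=> A B _ _; split; first exact: part_r0.
split; first exact: part_l0.
split; first exact: part_inv.
split; first exact: part_conj.
exact: part_neg.
Qed.
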